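(* Let $k$ be a positive integer and $G$ a graph. Then $\gamma_{P,k}(G-e)>\gamma_{P,k}(G)$ for every edge $e$ of $G$ if and only if $G$ is a disjoint union of $k$-generalized spiders.
   Context: All graphs are finite and simple; $G-e$ is obtained by deleting the edge $e$. A $k$-generalized spider is a tree with at most one vertex of degree $k+2$ or more. $N_G[v]$ is the closed neighbourhood of $v$, and $N_G[S]$ the union of closed neighbourhoods of vertices of $S$. For $S\subseteq V(G)$, define $\mathcal{P}^{0}_{G,k}(S)=N_G[S]$ and $\mathcal{P}^{i+1}_{G,k}(S)=\bigcup\{N_G[v] : v\in \mathcal{P}^{i}_{G,k}(S),\ |N_G[v]\setminus \mathcal{P}^{i}_{G,k}(S)|\le k\}$; these increase and stabilize to $\mathcal{P}^{\infty}_{G,k}(S)$. $S$ is a $k$-power dominating set if $\mathcal{P}^{\infty}_{G,k}(S)=V(G)$; $\gamma_{P,k}(G)$ is the minimum size of such a set. *)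

(* Defs.v *)
(* A finite simple graph is a symmetric irreflexive
   relation g : rel T on a finite type T of vertices. *)
From mathcomp Require Import all_boot.
Set Implicit Arguments.
Unset Strict Implicit.
Unset Printing Implicit Defensive.

Section PowerDom.
Variable T : finType.

Definition cnbhd (g : rel T) (v : T) : {set T} := [set u | (u == v) || g v u].

Definition cnbhd_set (g : rel T) (S : {set T}) : {set T} :=
  \bigcup_(v in S) cnbhd g v.

Definition pstep (g : rel T) (k : nat) (P : {set T}) : {set T} :=
  \bigcup_(v in P | #|cnbhd g v :\: P| <= k) cnbhd g v.

Definition pobs (g : rel T) (k : nat) (S : {set T}) (i : nat) : {set T} :=
  iter i (pstep g k) (cnbhd_set g S).

(* P^infty_{G,k}(S): the sequence is increasing in a set of size #|T|,
   hence stable from step #|T| on. *)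
Definition pobs_inf (g : rel T) (k : nat) (S : {set T}) : {set T} :=
  pobs g k S #|T|.

Definition k_power_dominating (g : rel T) (k : nat) (S : {set T}) : bool :=
  pobs_inf g k S == [set: T].

(* gamma_{P,k}(G): minimum size of a k-power dominating set
   ([set: T] is always one, so #|T| is a valid default). *)
Definition kpd_number (g : rel T) (k : nat) : nat :=
  \big[minn/#|T|]_(S : {set T} | k_power_dominating g k S) #|S|.

Definition del_edge (g : rel T) (u v : T) : rel T :=
  [rel x y | g x y && ~~ (((x == u) && (y == v)) || ((x == v) && (y == u)))].

Definition deg (g : rel T) (v : T) : nat := #|[set u | g v u]|.

Definition acyclic (g : rel T) : Prop :=
  forall c : seq T, uniq c -> 2 < size c -> ~~ cycle g c.

(* G is a disjoint union of k-generalized spiders: each connected component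
   is a tree with at most one vertex of degree >= k+2. *)
Definition spider_forest (k : nat) (g : rel T) : Prop :=
  acyclic g /\
  forall u v : T, connect g u v -> k + 2 <= deg g u -> k + 2 <= deg g v -> u = v.

End PowerDom.

(* Main.v *)
Require Import Defs.
From mathcomp Require Import all_boot zify.
Set Implicit Arguments. Unset Strict Implicit. Unset Printing Implicit Defensive.

Section Gen.
Variable T : finType.
Implicit Types (g : rel T) (S P : {set T}).

Definition inv g P := forall w, w \in P -> exists2 v, v \in P & (w \in cnbhd g v) && (cnbhd g v \subset P).

Lemma in_cnbhd g v w : (w \in cnbhd g v) = (w == v) || g v w.
Proof. by rewrite inE. Qed.

Lemma cnbhd_self g v : v \in cnbhd g v.
Proof. by rewrite in_cnbhd eqxx. Qed.

Lemma pstepP g k P w : reflect (exists2 v, v \in P & (#|cnbhd g v :\: P| <= k) && (w \in cnbhd g v)) (w \in pstep g k P).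
Proof.
apply: (iffP bigcupP) => [[v /andP[vP c] wN]|[v vP /andP[c wN]]]; exists v => //.
- by rewrite c.
- by rewrite vP.
Qed.

Lemma inv_sub g k P : inv g P -> P \subset pstep g k P.
Proof.
move=> iP; apply/subsetP => w /iP [v vP /andP[wv sub]].
apply/pstepP; exists v => //; rewrite wv andbT.
by move: sub; rewrite -setD_eq0 => /eqP ->; rewrite cards0.
Qed.

Lemma inv_step g k P : inv g P -> inv g (pstep g k P).
Proof.
move=> iP w /pstepP [v vP /andP[c wN]].
exists v; first by apply: (subsetP (inv_sub k iP)).
rewrite wN /=; apply/subsetP => x xN; apply/pstepP; exists v => //; by rewrite c xN.
Qed.

Lemma inv0 g S : inv g (cnbhd_set g S).
Proof.
move=> w /bigcupP [s sS ws]; exists s => //.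
- by apply/bigcupP; exists s => //; apply: cnbhd_self.
- rewrite ws /=; apply/subsetP => x xs; by apply/bigcupP; exists s.
Qed.

Lemma inv_pobs g k S i : inv g (pobs g k S i).
Proof. elim: i => [|i IH] /=; [exact: inv0 | exact: inv_step]. Qed.

Lemma pobs_mono g k S i j : i <= j -> pobs g k S i \subset pobs g k S j.
Proof.
move/subnK => <-; elim: (j - i) => [|d IH]; first by rewrite add0n subxx.
rewrite addSn; apply: subset_trans IH _; exact: (inv_sub k (@inv_pobs g k S (d + i))).
Qed.

Lemma S_pobs g k S i : S \subset pobs g k S i.
Proof.
apply: subset_trans (pobs_mono _ _ _ (leq0n i)); apply/subsetP => s sS.
by apply/bigcupP; exists s => //; apply: cnbhd_self.
Qed.

Lemma pobs_closure g k S i w : w \in pobs g k S i -> exists2 x, x \in S & connect g x w.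
Proof.
elim: i w => [|i IH] w /=.
- move/bigcupP => [s sS]; rewrite in_cnbhd => /orP[/eqP ->|gsw]; exists s => //.
  exact: connect1.
- move/pstepP => [v vP /andP[_]]; rewrite in_cnbhd => /orP[/eqP ->|gvw]; first exact: IH.
  have [x xS cx] := IH _ vP; exists x => //; apply: connect_trans cx (connect1 gvw).
Qed.

Lemma kpd_closure g k S w : k_power_dominating g k S -> exists2 x, x \in S & connect g x w.
Proof.
move/eqP=> h; apply: (@pobs_closure g k S #|T|); by rewrite /pobs_inf in h; rewrite h inE.
Qed.

Lemma bigmin_le_seq (I : eqType) (r : seq I) (P : pred I) (F : I -> nat) d i0 :
  i0 \in r -> P i0 -> \big[minn/d]_(i <- r | P i) F i <= F i0.
Proof.
elim: r => // a r IH; rewrite inE big_cons => /orP[/eqP <- ->|ir Pi]; first exact: geq_minl.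
case: ifP => _; last exact: IH.
by rewrite geq_min IH ?orbT.
Qed.

Lemma kpd_le g k S : k_power_dominating g k S -> kpd_number g k <= #|S|.
Proof.
move=> h; rewrite /kpd_number; apply: bigmin_le_seq => //; exact: mem_index_enum.
Qed.

Lemma kpd_setT g k : k_power_dominating g k [set: T].
Proof.
apply/eqP/eqP; rewrite eqEsubset subsetT /=; exact: S_pobs.
Qed.

Lemma kpd_exists g k : exists2 S, k_power_dominating g k S & #|S| = kpd_number g k.
Proof.
have: (kpd_number g k = #|T|) \/ exists2 S, k_power_dominating g k S & #|S| = kpd_number g k.
  rewrite /kpd_number; apply: (big_ind (fun x => x = #|T| \/ exists2 S, k_power_dominating g k S & #|S| = x)) => [|x y Hx Hy|S hS]; first by left.
  - rewrite /minn; case: ifP => _; [exact: Hx | exact: Hy].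
  - by right; exists S.
case=> // h; exists [set: T]; [exact: kpd_setT | by rewrite cardsT h].
Qed.

End Gen.

Section Par.
Variable T : finType.
Variables (g : rel T) (k : nat) (S : {set T}).
Hypothesis gsym : symmetric g.
Hypothesis girr : irreflexive g.
Hypothesis Skpd : k_power_dominating g k S.

Local Notation P i := (pobs g k S i).

Definition fi w := find (fun i => w \in P i) (iota 0 #|T|.+1).

Lemma inPT w : w \in P #|T|.
Proof. by move/eqP: Skpd; rewrite /pobs_inf => ->; rewrite inE. Qed.

Lemma has_fi w : has (fun i => w \in P i) (iota 0 #|T|.+1).
Proof. apply/hasP; exists #|T|; [by rewrite mem_iota add0n leq0n ltnSn | exact: inPT]. Qed.

Lemma fi_lt w : fi w < #|T|.+1.
Proof. by have := has_fi w; rewrite has_find size_iota. Qed.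

Lemma fi_in w : w \in P (fi w).
Proof.
have := nth_find 0 (has_fi w); rewrite nth_iota ?add0n //; exact: fi_lt.
Qed.

Lemma fi_before w j : j < fi w -> w \notin P j.
Proof.
move=> lt; have := before_find 0 lt; rewrite nth_iota ?add0n => [->//|].
by apply: leq_trans lt (ltnW (fi_lt w)).
Qed.

Lemma fi_min w i : w \in P i -> fi w <= i.
Proof. by move=> wi; rewrite leqNgt; apply/negP => /fi_before; rewrite wi. Qed.

Definition par w :=
  if w \in S then w else
  match fi w with
  | 0 => odflt w [pick s in S | w \in cnbhd g s]
  | i.+1 => odflt w [pick v | (v \in P i) && (#|cnbhd g v :\: P i| <= k) && (w \in cnbhd g v)]
  end.

Lemma par_in w : w \in S -> par w = w.
Proof. by rewrite /par => ->. Qed.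

Lemma par0 w : w \notin S -> fi w = 0 -> par (w) \in S /\ g (par w) w.
Proof.
move=> wS f0; rewrite /par (negbTE wS) f0.
case: pickP => [s /andP[sS ws]|H] /=.
- split => //; move: ws; rewrite in_cnbhd => /orP[/eqP ws|//].
  by move: wS; rewrite ws sS.
- have := fi_in w; rewrite f0 => /bigcupP [s sS ws].
  by have := H s; rewrite sS ws.
Qed.

Lemma parS w i : w \notin S -> fi w = i.+1 ->
  [/\ par w \in P i, #|cnbhd g (par w) :\: P i| <= k & g (par w) w].
Proof.
move=> wS fS; rewrite /par (negbTE wS) fS.
have wni : w \notin P i by apply: fi_before; rewrite fS.
case: pickP => [v /andP[/andP[vP c] wv]|H] /=.
- split => //; move: wv; rewrite in_cnbhd => /orP[/eqP ws|//].
  by move: wni; rewrite ws vP.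
- have := fi_in w; rewrite fS => /pstepP [v vP /andP[c wv]].
  by have := H v; rewrite vP c wv.
Qed.

Lemma del_edge_sub u v : subrel (del_edge g u v) g.
Proof. by move=> x y /andP[]. Qed.

Lemma cnbhd_del_sub u v x : cnbhd (del_edge g u v) x \subset cnbhd g x.
Proof.
apply/subsetP => y; rewrite !in_cnbhd => /orP[->//|/del_edge_sub ->]; exact: orbT.
Qed.

Lemma not_del u v x y : g x y -> ~~ ((x == u) && (y == v) || (x == v) && (y == u)) ->
  del_edge g u v x y.
Proof. by move=> gxy h; rewrite /del_edge /= gxy h. Qed.

Lemma del_edge_kpd u v : par u != v -> par v != u -> k_power_dominating (del_edge g u v) k S.
Proof.
move=> pu pv.
set g' := del_edge g u v.
have key : forall w, par w != w -> ~~ ((par w == u) && (w == v) || (par w == v) && (w == u)).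
  move=> w _; apply/negP => /orP[/andP[/eqP a /eqP b]|/andP[/eqP a /eqP b]].
  - by move: pv; rewrite -b a eqxx.
  - by move: pu; rewrite -b a eqxx.
have sub : forall i, P i \subset pobs g' k S i.
  elim => [|i IH].
  - apply/subsetP => w /= wP.
    case wS: (w \in S); first by apply/bigcupP; exists w => //; apply: cnbhd_self.
    have f0 : fi w = 0 by apply/eqP; rewrite -leqn0; apply: fi_min.
    have [sS gsw] := par0 (negbT wS) f0.
    apply/bigcupP; exists (par w) => //; rewrite in_cnbhd; apply/orP; right.
    apply: not_del => //; apply: key; apply/negP => /eqP e; by rewrite e girr in gsw.
  - apply/subsetP => w wP.
    case wi: (w \in P i).
      by apply: (subsetP (pobs_mono g' k S (leqnSn i))); apply: (subsetP IH).
    have wS : w \notin S by apply/negP => /(subsetP (S_pobs g k S i)); rewrite wi.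
    have fS : fi w = i.+1.
      apply/eqP; rewrite eqn_leq fi_min //=; rewrite ltnNge; apply/negP => le.
      by move: (subsetP (pobs_mono g k S le) _ (fi_in w)); rewrite wi.
    have [vP c gvw] := parS wS fS.
    apply/pstepP; exists (par w); first by apply: (subsetP IH).
    apply/andP; split.
      apply: leq_trans c; apply: subset_leq_card; apply/subsetP => x; rewrite !in_setD.
      case/andP => xP xN; rewrite (subsetP (cnbhd_del_sub u v (par w)) _ xN) andbT.
      by apply/negP => /(subsetP IH); rewrite (negbTE xP).
    rewrite in_cnbhd; apply/orP; right; apply: not_del => //; apply: key.
    apply/negP => /eqP e; by rewrite e girr in gvw.
apply/eqP; apply/eqP; rewrite eqEsubset subsetT /=.
apply: subset_trans (sub #|T|); apply/subsetP => x _; exact: inPT.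
Qed.

End Par.

Section Tree.
Variable T : finType.
Variables (g : rel T) (k : nat) (S : {set T}).
Hypothesis gsym : symmetric g.
Hypothesis girr : irreflexive g.
Hypothesis Skpd : k_power_dominating g k S.
Local Notation P i := (pobs g k S i).
Local Notation par := (par g k S).
Local Notation fi := (fi g k S).
Hypothesis H : forall x y, g x y -> (par x == y) || (par y == x).

Definition m w := 2 * fi w + (w \notin S).

Lemma fiS s : s \in S -> fi s = 0.
Proof. move=> sS; apply/eqP; rewrite -leqn0; apply: (fi_min Skpd); exact: (subsetP (S_pobs g k S 0)). Qed.

Lemma m_par w : w \notin S -> m (par w) < m w.
Proof.
move=> wS; case e: (fi w) => [|i].
- have [pS _] := par0 Skpd wS e.
  by rewrite /m e fiS // pS wS.
- have [pP _ _] := parS Skpd wS e.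
  have := fi_min Skpd pP; rewrite /m e wS => le.
  case: (par w \notin S) => /=; lia.
Qed.

Lemma edge_max w y : g w y -> m y <= m w -> par w = y.
Proof.
move=> gwy le; case/orP: (H gwy) => /eqP // py.
case yS: (y \in S).
  by move: py; rewrite par_in // => e; rewrite e girr in gwy.
have := m_par (negbT yS); rewrite py; lia.
Qed.

Lemma no_cycle_max w p : uniq (w :: p) -> 2 < size (w :: p) -> cycle g (w :: p) ->
  (forall x, x \in w :: p -> m x <= m w) -> False.
Proof.
move=> u sz cc mx; move: cc => /=; rewrite rcons_path => /andP[pp glw].
case: p u sz pp glw mx => [|a [|b q]] // u _ pp glw mx.
have gwa : g w a by case/andP: pp.
rewrite [last _ _]/= in glw.
have ain : a \in w :: a :: b :: q by rewrite !inE eqxx orbT.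
have ea := edge_max gwa (mx a ain).
rewrite gsym in glw.
have lin : last a (b :: q) \in b :: q by rewrite /= mem_last.
have lin2 : last a (b :: q) \in w :: a :: b :: q by rewrite inE (mem_last a (b :: q)) orbT.
have eb := edge_max glw (mx _ lin2).
move: u; rewrite cons_uniq => /andP[_]; rewrite cons_uniq => /andP[anin _].
by move: anin; rewrite -ea eb lin.
Qed.

Lemma acyc : acyclic g.
Proof.
move=> c uc sc; apply/negP => cc.
have [x0 x0c] : exists x, x \in c by case: c sc {uc cc} => [|x c] // _; exists x; rewrite inE eqxx.
case: (arg_maxnP m x0c) => w wc wmax.
case: (rot_to wc) => i p e.
apply: (@no_cycle_max w p); rewrite -e ?rot_uniq ?size_rot ?rot_cycle //.
by move=> x; rewrite mem_rot; exact: wmax.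
Qed.

Lemma high_in_S h : k + 2 <= deg g h -> h \in S.
Proof.
move=> dh; apply/negPn/negP => hS.
pose C := [set y | g h y && (par y == h)].
have dC : deg g h <= #|C| + 1.
  apply: (@leq_trans #|par h |: C|).
    apply: subset_leq_card; apply/subsetP => y; rewrite !inE => ghy.
    by case/orP: (H ghy) => [/eqP ->|->]; rewrite ?eqxx ?ghy ?orbT.
  rewrite cardsU1 addnC leq_add2l; exact: leq_b1.
have C0 : 0 < #|C| by lia.
have [y0 y0C] : exists y, y \in C by apply/set0Pn; rewrite -card_gt0.
case: (@arg_minnP _ y0 (fun z => z \in C) fi y0C) => y yC ymin.
move: (yC); rewrite /C inE => /andP[ghy /eqP py].
have yS : y \notin S by apply/negP => yS; move: py; rewrite par_in // => e; rewrite e girr in ghy.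
case e: (fi y) => [|i].
  by have [pS _] := par0 Skpd yS e; move: pS; rewrite py (negbTE hS).
have [hP c _] := parS Skpd yS e; rewrite py in hP c.
have : #|C| <= k.
  apply: leq_trans c; apply: subset_leq_card; apply/subsetP => z zC.
  move: (zC); rewrite /C inE => /andP[ghz _]; rewrite in_setD in_cnbhd ghz orbT andbT.
  apply: (fi_before Skpd); have := ymin _ zC; rewrite e; done.
lia.
Qed.

Definition root w := iter (2 * #|T| + 2) par w.

Lemma iter_fixS n w : w \in S -> iter n par w = w.
Proof. move=> wS; elim: n => //= n ->; exact: par_in. Qed.

Lemma iter_inS n w : m w <= n -> iter n par w \in S.
Proof.
elim: n w => [|n IH] w le.
  by move: le; rewrite leqn0 /m addn_eq0 => /andP[_]; rewrite eqb0 negbK.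
case wS: (w \in S); first by rewrite iter_fixS.
rewrite iterSr; apply: IH; have := m_par (negbT wS); lia.
Qed.

Lemma m_bound w : m w <= 2 * #|T| + 1.
Proof. have := fi_lt Skpd w; rewrite /m; case: (w \notin S) => /=; lia. Qed.

Lemma root_par w : root (par w) = root w.
Proof.
rewrite /root -iterSr iterS par_in //; apply: iter_inS; have := m_bound w; lia.
Qed.

Lemma root_edge x y : g x y -> root x = root y.
Proof. move=> gxy; case/orP: (H gxy) => /eqP <-; by rewrite root_par. Qed.

Lemma root_connect x y : connect g x y -> root x = root y.
Proof.
case/connectP => p pp ->; elim: p x pp => //= a p IH x /andP[gxa pp].
by rewrite (root_edge gxa); apply: IH.
Qed.

Lemma uniq_high u v : connect g u v -> k + 2 <= deg g u -> k + 2 <= deg g v -> u = v.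
Proof.
move=> c du dv; have := root_connect c.
by rewrite /root !iter_fixS //; apply: high_in_S.
Qed.

Lemma spider : spider_forest k g.
Proof. split; [exact: acyc | exact: uniq_high]. Qed.
End Tree.

Section Back.
Variable T : finType.
Variables (g : rel T) (k : nat).
Hypothesis gsym : symmetric g.
Hypothesis girr : irreflexive g.

Lemma del_sym u v : symmetric (del_edge g u v).
Proof.
move=> x y; rewrite /del_edge /= gsym; congr (_ && ~~ _).
by rewrite orbC; do 2 case: (_ == _); case: (_ == _); case: (_ == _).
Qed.

Lemma bridge u v : acyclic g -> g u v -> connect (del_edge g u v) u v -> False.
Proof.
move=> ac guv /connectP [p pp ev].
move: ev; case: (shortenP pp) => p' pp' up' _ vl.
case: p' pp' up' vl => [|a [|b q]] pp' up' vl.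
- by move: guv; rewrite vl /= girr.
- move: pp'; rewrite /= andbT vl /= /del_edge /= !eqxx /=; by rewrite andbF.
- have gp := sub_path (@del_edge_sub T g u v) pp'.
  have := ac (u :: a :: b :: q) up' isT.
  rewrite (_ : cycle g _ = path g u [:: a, b & q] && g (last u [:: a, b & q]) u).
    by rewrite gp -vl gsym guv.
  exact: (rcons_path g u [:: a, b & q] u).
Qed.

Lemma card_cnbhd y : #|cnbhd g y| = deg g y + 1.
Proof.
rewrite (_ : cnbhd g y = y |: [set u | g y u]); last by apply/setP => z; rewrite !inE.
by rewrite cardsU1 inE girr addnC.
Qed.

Lemma prop_path S' j x p : path g x p -> cnbhd g x \subset pobs g k S' j ->
  (forall y, y \in p -> deg g y <= k + 1) ->
  cnbhd g (last x p) \subset pobs g k S' (j + size p).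
Proof.
elim: p x j => [|y p IH] x j /=; first by rewrite addn0.
move=> /andP[gxy pp] sub low.
rewrite -addSnnS; apply: IH => //; last by move=> z zp; apply: low; rewrite inE zp orbT.
have yP : y \in pobs g k S' j by apply: (subsetP sub); rewrite in_cnbhd gxy orbT.
have xP : x \in pobs g k S' j by apply: (subsetP sub); exact: cnbhd_self.
apply/subsetP => z zy; apply/pstepP; exists y => //; rewrite zy andbT.
have dy := low y (mem_head _ _).
have xy : x != y by apply/negP => /eqP e; rewrite e girr in gxy.
apply: (@leq_trans #|cnbhd g y :\: [set x; y]|).
  apply: subset_leq_card; apply/subsetP => w; rewrite !in_setD => /andP[wP ->].
  rewrite andbT !inE; apply/negP => /orP[] /eqP e; by move: wP; rewrite e ?xP ?yP.
rewrite cardsD card_cnbhd (_ : cnbhd g y :&: [set x; y] = [set x; y]).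
  by rewrite cards2 xy; lia.
apply/setIidPr/subsetP => w; rewrite !inE => /orP[] /eqP ->; by rewrite ?eqxx ?(gsym y x) ?gxy ?orbT.
Qed.


Definition hi x := k + 2 <= deg g x.
Definition cpred w := [pred h | connect g w h && (hi h || ~~ [exists h', connect g w h' && hi h'])].
Definition cen w := odflt w [pick h | cpred w h].

Lemma csym : connect_sym g.
Proof. exact: sym_connect_sym. Qed.

Lemma cen_spec w : cpred w (cen w).
Proof.
rewrite /cen; case: pickP => //= none.
case: (boolP [exists h', connect g w h' && hi h']) => [/existsP [h /andP[c hh]]|ne].
  by have := none h; rewrite /= c hh.
by have := none w; rewrite /= connect0 ne orbT.
Qed.

Lemma cen_pick w : [pick h | cpred w h] = Some (cen w).
Proof.
have := cen_spec w; rewrite {2}/cen; case: pickP => //= none.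
by rewrite (none (cen w)).
Qed.

Lemma cen_conn w : connect g w (cen w).
Proof. by case/andP: (cen_spec w). Qed.

Lemma cen_eq w w' : connect g w w' -> cen w = cen w'.
Proof.
move=> c.
have e : cpred w =1 cpred w'.
  move=> h /=; rewrite (same_connect csym c); congr (_ && (_ || ~~ _)).
  by apply: eq_existsb => h'; rewrite (same_connect csym c).
by have := cen_pick w; rewrite (eq_pick e) cen_pick => -[].
Qed.

Lemma cen_low w x : spider_forest k g -> connect g w x -> x != cen w -> deg g x <= k + 1.
Proof.
move=> [_ sp] c ne; rewrite leqNgt; apply/negP => hx.
have /andP[cc] := cen_spec w.
have ex : [exists h', connect g w h' && hi h'] by apply/existsP; exists x; rewrite c /hi; apply/andP; split => //; lia.
rewrite ex orbF => hc.
have cx : connect g (cen w) x by apply: connect_trans c; rewrite csym.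
by move: ne; rewrite (sp _ _ cx hc) ?eqxx //; lia.
Qed.

Lemma backward u v : spider_forest k g -> g u v ->
  kpd_number g k < kpd_number (del_edge g u v) k.
Proof.
move=> sf guv; set g' := del_edge g u v.
have [S hS eS] := kpd_exists g' k.
have c' : forall x y, connect g' x y -> connect g x y.
  apply: connect_sub => x y gxy; apply: connect1; exact: del_edge_sub gxy.
pose S' := [set cen x | x in S].
have kS' : k_power_dominating g k S'.
  apply/eqP/eqP; rewrite eqEsubset subsetT /=; apply/subsetP => w _.
  have [x xS cx] := kpd_closure w hS.
  have sw : connect g (cen x) w by apply: connect_trans (c' _ _ cx); rewrite csym cen_conn.
  case/connectP: sw => p0 pp0 ->.
  case: (shortenP pp0) => p pp up _.
  have sub : cnbhd g (cen x) \subset pobs g k S' 0.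
    apply/subsetP => z zc; apply/bigcupP; exists (cen x) => //; exact: imset_f.
  have low : forall y, y \in p -> deg g y <= k + 1.
    move=> y yp; apply: (@cen_low x y sf).
      apply: connect_trans (cen_conn x) _; apply: (path_connect pp).
      by rewrite inE yp orbT.
    apply/negP => /eqP e; move: up; rewrite cons_uniq -e yp; done.
  have := prop_path pp sub low; rewrite add0n => sub2.
  apply: (subsetP (pobs_mono g k S' (_ : size p <= #|T|))); last first.
    by apply: (subsetP sub2); exact: cnbhd_self.
  move/card_uniqP: up => cu; have := max_card (mem (cen x :: p)); rewrite cu /=; lia.
have [xu xuS cxu] := kpd_closure u hS.
have [xv xvS cxv] := kpd_closure v hS.
have neq : xu != xv.
  apply/negP => /eqP e; apply: (bridge (proj1 sf) guv).
  apply: connect_trans _ cxv; rewrite (sym_connect_sym (@del_sym u v)) -e //.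
have ceq : cen xu = cen xv.
  apply: cen_eq; apply: connect_trans (c' _ _ cxu) _.
  apply: connect_trans (connect1 guv) _; rewrite csym; exact: c'.
have lt : #|S'| < #|S|.
  rewrite ltn_neqAle leq_imset_card andbT; apply/negP => /imset_injP inj.
  by move: neq; rewrite (inj _ _ xuS xvS ceq) eqxx.
by apply: leq_ltn_trans (kpd_le kS') _; rewrite -eS.
Qed.
End Back.

Theorem mainTheorem3 (T : finType) (g : rel T) (k : nat)
  (gsym : symmetric g) (girr : irreflexive g) (kpos : 0 < k) :
  (forall u v : T, g u v -> kpd_number g k < kpd_number (del_edge g u v) k)
  <-> spider_forest k g.
Proof.
split; last by move=> sf u v guv; exact: backward.
move=> crit; have [S hS eS] := kpd_exists g k.
apply: (@spider T g k S gsym girr hS) => x y gxy.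
apply/negPn/negP; rewrite negb_or => /andP[a b].
have := kpd_le (del_edge_kpd girr hS a b); rewrite eS.
by rewrite leqNgt crit.
Qed.
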